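(* Let $\langle S,L,\tau,\ell\rangle$ be a labelled Markov chain and $P\in\mathcal{P}_\tau$ an $S^2_\Delta$-closed policy. If $C$ is a closed communication class of the Markov chain $\langle S\times S,P\rangle$, then either $C=\{(s,t)\}$ for some $(s,t)\in S^2_1$, or $C\subseteq S^2_\Delta$, or $C\subseteq S^2_{0,\tau}$.
   Context: Labelled Markov chain: finite $S$, finite $L$, $\tau:S\to\mathcal{D}(S)$, $\ell:S\to L$. $\Omega(\mu,\nu)$ = couplings. $S^2_\Delta=\{(s,s)\}$, $S^2_1=\{(s,t)\mid\ell(s)\ne\ell(t)\}$, $S^2_{0,\tau}=\{(s,t)\mid s\ne t,\ s\sim t\}$ where $\sim$ is probabilistic bisimilarity (the union of all equivalence relations $R$ such that for $(s,t)\in R$, $\ell(s)=\ell(t)$ and some $\omega\in\Omega(\tau(s),\tau(t))$ has support in $R$). $\mathcal{P}_\tau$ = policies $P:S\times S\to\mathcal{D}(S\times S)$ with $P(s,t)\in\Omega(\tau(s),\tau(t))$ for $(s,t)\notin S^2_1$ and $P(s,t)$ the point mass at $(s,t)$ for $(s,t)\in S^2_1$. $P$ is $S^2_\Delta$-closed if $\mathrm{support}(P(s,s))\subseteq S^2_\Delta$ for all $s$. A communication class is an equivalence class of mutual reachability in $\langle S\times S,P\rangle$; it is closed if it cannot be left with positive probability. *)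

(* Defs.v *)
From HB Require Import structures.
From mathcomp Require Import all_boot all_order all_algebra.
From mathcomp Require Import reals.
Set Implicit Arguments. Unset Strict Implicit. Unset Printing Implicit Defensive.
Import Order.TTheory GRing.Theory Num.Theory.
Local Open Scope ring_scope.

Section LMC.
Variable R : realType.

Definition is_distr (T : finType) (d : {ffun T -> R}) : Prop :=
  (forall x, 0 <= d x) /\ \sum_(x : T) d x = 1.

Definition dirac (T : finType) (x : T) : {ffun T -> R} :=
  [ffun y => (y == x)%:R].

Definition supp (T : finType) (d : {ffun T -> R}) : {set T} :=
  [set x | d x != 0].

Variables (S L : finType).

Definition coupling (mu nu : {ffun S -> R}) (w : {ffun S * S -> R}) : Prop :=
  is_distr w /\
  (forall s, \sum_(t : S) w (s, t) = mu s) /\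
  (forall t, \sum_(s : S) w (s, t) = nu t).

Variables (tau : S -> {ffun S -> R}) (ell : S -> L).

Definition is_LMC : Prop := forall s, is_distr (tau s).

Definition bisimulation (Rel : rel S) : Prop :=
  equivalence_rel Rel /\
  forall s t, Rel s t ->
    ell s = ell t /\
    exists w, coupling (tau s) (tau t) w /\ supp w \subset [set p | Rel p.1 p.2].

Definition bisimilar (s t : S) : Prop :=
  exists Rel : rel S, bisimulation Rel /\ Rel s t.

Definition S2_Delta : {set S * S} := [set p | p.1 == p.2].
Definition S2_1 : {set S * S} := [set p | ell p.1 != ell p.2].
Definition in_S2_0 (p : S * S) : Prop := p.1 != p.2 /\ bisimilar p.1 p.2.

Definition is_policy (P : S * S -> {ffun S * S -> R}) : Prop :=
  forall p : S * S,
    (p \notin S2_1 -> coupling (tau p.1) (tau p.2) (P p)) /\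
    (p \in S2_1 -> P p = dirac p).

Definition Delta_closed (P : S * S -> {ffun S * S -> R}) : Prop :=
  forall s : S, supp (P (s, s)) \subset S2_Delta.

Definition edge (P : S * S -> {ffun S * S -> R}) : rel (S * S) :=
  fun p q => P p q != 0.

Definition comm_class (P : S * S -> {ffun S * S -> R}) (C : {set S * S}) : Prop :=
  exists p, C = [set q | connect (edge P) p q && connect (edge P) q p].

Definition closed_class (P : S * S -> {ffun S * S -> R}) (C : {set S * S}) : Prop :=
  comm_class P C /\ forall p q, p \in C -> edge P p q -> q \in C.

End LMC.

(* Main.v *)
Require Import Defs.
From HB Require Import structures.
From mathcomp Require Import all_boot all_order all_algebra.
From mathcomp Require Import reals.
Import Order.TTheory GRing.Theory Num.Theory.
Local Open Scope ring_scope.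

Lemma reach_inv (T : finType) (e : rel T) (A : pred T) x y :
  (forall a b, A a -> e a b -> A b) -> A x -> connect e x y -> A y.
Proof.
move=> H Ax /connectP [p Hp ->]; elim: p x Ax Hp => [|z p IH] x Ax //=.
by case/andP=> exz Hp; apply: IH Hp; apply: H exz.
Qed.

Lemma connect_ind_rel (T : finType) (e : rel T) (Q : T -> T -> Prop) x y :
  (forall a, Q a a) -> (forall a b c, Q a b -> Q b c -> Q a c) ->
  (forall a b, e a b -> Q a b) -> connect e x y -> Q x y.
Proof.
move=> Hr Ht He /connectP [p Hp ->]; elim: p x Hp => [|z p IH] x //=.
by case/andP=> exz Hp; apply: Ht (He _ _ exz) (IH _ Hp).
Qed.

Lemma balanced_coupling (R : realType) (S : finType) (Rel : rel S)
  (mu nu : {ffun S -> R}) :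
  equivalence_rel Rel -> is_distr mu -> is_distr nu ->
  (forall u, \sum_(x | Rel u x) mu x = \sum_(x | Rel u x) nu x) ->
  exists w, coupling mu nu w /\ supp w \subset [set p | Rel p.1 p.2].
Proof.
move=> /equivalence_relP [Rr Rt] [mu0 mu1] [nu0 nu1] Hb.
have Rs : forall a b, Rel a b -> Rel b a.
  by move=> a b ab; rewrite -(Rt _ _ ab) Rr.
pose m u := \sum_(x | Rel u x) mu x.
have m0 u : 0 <= m u by apply: sumr_ge0.
have mule u : mu u <= m u.
  by rewrite /m (bigD1 u) ?Rr //= lerDl sumr_ge0.
have nule u : nu u <= m u.
  by rewrite /m Hb (bigD1 u) ?Rr //= lerDl sumr_ge0.
have mE a b : Rel a b -> m a = m b.
  by move=> ab; apply: eq_bigl => x; rewrite (Rt _ _ ab).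
pose w : {ffun S * S -> R} :=
  [ffun p => if Rel p.1 p.2 then mu p.1 * nu p.2 / m p.1 else 0].
have marg1 s : \sum_t w (s, t) = mu s.
  rewrite (eq_bigr (fun t => if Rel s t then mu s / m s * nu t else 0)); last first.
    by move=> t _; rewrite ffunE /= mulrAC.
  rewrite -big_mkcond /= -big_distrr /= -Hb -/(m s).
  have [Hm|mn0] := eqVneq (m s) 0.
    by rewrite Hm mulr0; apply/eqP; rewrite eq_le mu0 /= -Hm mule.
  by rewrite divfK.
have marg2 t : \sum_s w (s, t) = nu t.
  rewrite (eq_bigr (fun s => if Rel s t then mu s * (nu t / m t) else 0)); last first.
    move=> s _; rewrite ffunE /=; case: ifP => // st.
    by rewrite (mE _ _ st) mulrA.
  rewrite -big_mkcond /= -big_distrl /=.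
  have -> : \sum_(i | Rel i t) mu i = m t.
    by apply: eq_bigl => x; apply/idP/idP => /Rs.
  have [Hm|mn0] := eqVneq (m t) 0.
    by rewrite Hm mul0r; apply/eqP; rewrite eq_le nu0 /= -Hm nule.
  by rewrite mulrC divfK.
exists w; split; last first.
  by apply/subsetP => p; rewrite !inE ffunE; case: ifP => // _; rewrite eqxx.
split; [split|split=> //].
  by move=> p; rewrite ffunE; case: ifP => // _; rewrite divr_ge0 ?mulr_ge0.
rewrite -mu1; transitivity (\sum_(p : S * S) w (p.1, p.2)); first by apply: eq_bigr; case.
by rewrite -(pair_bigA _ (fun a b => w (a, b))) /=; apply: eq_bigr => s _.
Qed.

Theorem mainTheorem15 (R : realType) (S L : finType)
  (tau : S -> {ffun S -> R}) (ell : S -> L)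
  (P : S * S -> {ffun S * S -> R}) (C : {set S * S}) :
  is_LMC tau ->
  is_policy tau ell P ->
  Delta_closed P ->
  closed_class P C ->
  (exists p, p \in S2_1 ell /\ C = [set p]) \/
  C \subset S2_Delta S \/
  (forall p, p \in C -> in_S2_0 tau ell p).
Proof.
move=> Hlmc Hpol Hdel [[p0 HC] Hcl].
have conC q r : q \in C -> r \in C -> connect (edge P) q r.
  rewrite HC !inE => /andP [_ qp] /andP [pr _]; exact: connect_trans qp pr.
case: (pickP [pred p | (p \in C) && (p \in S2_1 ell)]) => [p /andP [pC p1]|no1].
  left; exists p; split => //; apply/setP => q; rewrite inE.
  apply/idP/eqP => [qC|->//]; apply/eqP.
  apply: (@reach_inv _ _ (pred1 p)) (conC _ _ pC qC) => //.
  move=> a b /eqP -> ; rewrite /edge (proj2 (Hpol p) p1) /dirac ffunE.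
  by rewrite /=; case: (b == p); rewrite ?eqxx.
  by rewrite /= eqxx.
case: (pickP [pred p | (p \in C) && (p \in S2_Delta S)]) => [p /andP [pC pD]|noD].
  right; left; apply/subsetP => q qC.
  apply: (@reach_inv _ _ [in S2_Delta S]) (conC _ _ pC qC) => //.
  move=> [a a'] b; rewrite /= inE /= => /eqP <- Hab.
  by apply: (subsetP (Hdel a)); rewrite inE.
right; right.
have n1 q : q \in C -> q \notin S2_1 ell.
  by move=> qC; move: (no1 q); rewrite /= qC /= => ->.
have nD q : q \in C -> q \notin S2_Delta S.
  by move=> qC; move: (noD q); rewrite /= qC /= => ->.
pose E : rel S := fun x y => ((x, y) \in C) || ((y, x) \in C).
have Esym : connect_sym E.
  by apply: sym_connect_sym => x y; rewrite /E orbC.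
pose Rel := connect E.
have Hq q : q \in C -> ell q.1 = ell q.2 /\
    forall u, \sum_(x | Rel u x) tau q.1 x = \sum_(x | Rel u x) tau q.2 x.
  move=> qC; split; first by move: (n1 q qC); rewrite inE negbK => /eqP.
  move=> u.
  have [_ [m1 m2]] := proj1 (Hpol q) (n1 q qC).
  transitivity (\sum_x \sum_y (if Rel u x then P q (x, y) else 0)).
    rewrite big_mkcond; apply: eq_bigr => x _; case: ifP => _.
      by rewrite m1.
    by rewrite big1.
  transitivity (\sum_y \sum_x (if Rel u y then P q (x, y) else 0)); last first.
    rewrite [RHS]big_mkcond; apply: eq_bigr => y _; case: ifP => _.
      by rewrite m2.
    by rewrite big1.
  rewrite exchange_big; apply: eq_bigr => y _; apply: eq_bigr => x _.
  have [->|nz] := eqVneq (P q (x, y)) 0; first by rewrite !if_same.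
  have xy : Rel x y by apply: connect1; rewrite /E (Hcl q (x, y) qC nz).
  by rewrite /Rel (same_connect_r Esym xy u).
move=> p pC; split; first by move: (nD p pC); rewrite inE.
exists Rel; split; last first.
  by apply: connect1; rewrite /E -surjective_pairing pC.
split.
  by apply/equivalence_relP; split; [exact: connect0 | exact: same_connect Esym].
move=> s t st.
suff [Hl Hb] : ell s = ell t /\
    forall u, \sum_(x | Rel u x) tau s x = \sum_(x | Rel u x) tau t x.
  split => //; apply: balanced_coupling => //.
  by apply/equivalence_relP; split; [exact: connect0 | exact: same_connect Esym].
apply: (@connect_ind_rel _ E (fun a b => ell a = ell b /\ forall u, \sum_(x | Rel u x) tau a x = \sum_(x | Rel u x) tau b x)) st.
- by [].
- by move=> a b c [l1 h1] [l2 h2]; split; [rewrite l1 | move=> u; rewrite h1].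
- move=> a b /orP [abC|baC].
    exact: (Hq (a, b) abC).
  have [l h] := Hq (b, a) baC; split; first by rewrite l.
  by move=> u; rewrite h.
Qed.
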